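(* Assume $\delta_1:=\alpha_1-\alpha_2-\gamma_2>0$, $\delta_2:=\alpha_1-\alpha_3+\eta_1>0$ and $\frac{\mu_4'-\mu_0}{\alpha_1}<\frac12\sigma_1$. For $K>K^*:=\frac{b\sigma_1}{b-\mu_0}$ let $G_3(K)=(S^*,I_1^*,0,0,R^* )$ be the unique equilibrium of the system below with positive $S^*,I_1^*,R^*$, and define $$P_1(K)=\delta_1I_1^*+\alpha_2(\sigma_1-\sigma_2),\quad Q_1(K)=\delta_2I_1^*+\alpha_3(\sigma_1-\sigma_3),\quad U_1(K)=\beta_2(\gamma_1+\gamma_2)S^*I_1^*,$$ $\Delta_1(K)=P_1(K)Q_1(K)-U_1(K)$. Then $P_1$ and $Q_1$ are strictly increasing in $K$, $U_1$ is strictly increasing in $K$, and on every interval $J\subset(K^*,\infty)$ on which $P_1<0$ and $Q_1<0$, the function $\Delta_1$ is strictly decreasing. Moreover $\Delta_1(K)\to\alpha_2\alpha_3(\sigma_2-\sigma_1)(\sigma_3-\sigma_1)>0$ as $K\downarrow K^*$.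
   Context: Consider, for $t\ge0$, the system $S'=\big(b(1-\tfrac{N}{K})-\alpha_1I_1-\alpha_2I_2-(\beta_1+\beta_2+\alpha_3)I_{12}-\mu_0\big)S$, $I_1'=\big(b(1-\tfrac{N}{K})+\alpha_1S-\eta_1I_{12}-\gamma_1I_2-\mu_1\big)I_1+\beta_1SI_{12}$, $I_2'=\big(b(1-\tfrac{N}{K})+\alpha_2S-\eta_2I_{12}-\gamma_2I_1-\mu_2\big)I_2+\beta_2SI_{12}$, $I_{12}'=\big(b(1-\tfrac{N}{K})+\alpha_3S+\eta_1I_1+\eta_2I_2-\mu_3\big)I_{12}+(\gamma_1+\gamma_2)I_1I_2$, $R'=\big(b(1-\tfrac{N}{K})-\mu_4'\big)R+\rho_1I_1+\rho_2I_2+\rho_3I_{12}$, where $N=S+I_1+I_2+I_{12}+R$. All parameters $b,K,\alpha_i,\beta_i,\gamma_i,\eta_i,\rho_i,\mu_0,\mu_i'$ are positive and $\mu_i=\rho_i+\mu_i'$ for $i=1,2,3$; $K$ is regarded as a varying parameter, the others fixed. Standing assumptions: $b>\mu_0$, $b>\mu_i$ ($i=1,2,3$), $b>\mu_4'$, and $\mu_0<\mu_4'<\mu_j'$ for $j=1,2,3$. Set $\sigma_k=(\mu_k-\mu_0)/\alpha_k$ ($k=1,2,3$), assumed to satisfy $\sigma_1<\sigma_2<\sigma_3$, and $S^{**}=\frac{K}{b}(b-\mu_0)$. *)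

(* Defs.v *)
From Stdlib Require Import Reals.
From Coquelicot Require Import Coquelicot.
Open Scope R_scope.

Record params := Params {
  b : R;
  alpha1 : R; alpha2 : R; alpha3 : R;
  beta1 : R; beta2 : R;
  gamma1 : R; gamma2 : R;
  eta1 : R; eta2 : R;
  rho1 : R; rho2 : R; rho3 : R;
  mu0 : R;
  mu1' : R; mu2' : R; mu3' : R; mu4' : R
}.

Definition mu1 (p : params) := rho1 p + mu1' p.
Definition mu2 (p : params) := rho2 p + mu2' p.
Definition mu3 (p : params) := rho3 p + mu3' p.

Definition sigma1 (p : params) := (mu1 p - mu0 p) / alpha1 p.
Definition sigma2 (p : params) := (mu2 p - mu0 p) / alpha2 p.
Definition sigma3 (p : params) := (mu3 p - mu0 p) / alpha3 p.

Definition logi (p : params) (K S I1 I2 I12 Rr : R) :=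
  b p * (1 - (S + I1 + I2 + I12 + Rr) / K).

Definition fS p K S I1 I2 I12 Rr :=
  (logi p K S I1 I2 I12 Rr - alpha1 p * I1 - alpha2 p * I2
   - (beta1 p + beta2 p + alpha3 p) * I12 - mu0 p) * S.
Definition fI1 p K S I1 I2 I12 Rr :=
  (logi p K S I1 I2 I12 Rr + alpha1 p * S - eta1 p * I12 - gamma1 p * I2 - mu1 p) * I1
  + beta1 p * S * I12.
Definition fI2 p K S I1 I2 I12 Rr :=
  (logi p K S I1 I2 I12 Rr + alpha2 p * S - eta2 p * I12 - gamma2 p * I1 - mu2 p) * I2
  + beta2 p * S * I12.
Definition fI12 p K S I1 I2 I12 Rr :=
  (logi p K S I1 I2 I12 Rr + alpha3 p * S + eta1 p * I1 + eta2 p * I2 - mu3 p) * I12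
  + (gamma1 p + gamma2 p) * I1 * I2.
Definition fR p K S I1 I2 I12 Rr :=
  (logi p K S I1 I2 I12 Rr - mu4' p) * Rr + rho1 p * I1 + rho2 p * I2 + rho3 p * I12.

Definition is_equilibrium p K S I1 I2 I12 Rr : Prop :=
  fS p K S I1 I2 I12 Rr = 0 /\ fI1 p K S I1 I2 I12 Rr = 0 /\
  fI2 p K S I1 I2 I12 Rr = 0 /\ fI12 p K S I1 I2 I12 Rr = 0 /\
  fR p K S I1 I2 I12 Rr = 0.

Definition all_params_pos (p : params) : Prop :=
  0 < b p /\ 0 < alpha1 p /\ 0 < alpha2 p /\ 0 < alpha3 p /\
  0 < beta1 p /\ 0 < beta2 p /\ 0 < gamma1 p /\ 0 < gamma2 p /\
  0 < eta1 p /\ 0 < eta2 p /\ 0 < rho1 p /\ 0 < rho2 p /\ 0 < rho3 p /\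
  0 < mu0 p /\ 0 < mu1' p /\ 0 < mu2' p /\ 0 < mu3' p /\ 0 < mu4' p.

Definition standing (p : params) : Prop :=
  mu0 p < b p /\ mu1 p < b p /\ mu2 p < b p /\ mu3 p < b p /\ mu4' p < b p /\
  mu0 p < mu4' p /\ mu4' p < mu1' p /\ mu4' p < mu2' p /\ mu4' p < mu3' p /\
  sigma1 p < sigma2 p /\ sigma2 p < sigma3 p.

Definition Kstar (p : params) := b p * sigma1 p / (b p - mu0 p).
Definition delta1 (p : params) := alpha1 p - alpha2 p - gamma2 p.
Definition delta2 (p : params) := alpha1 p - alpha3 p + eta1 p.

(* Main.v *)
Require Import Defs.
From Stdlib Require Import Reals Lra.
From Coquelicot Require Import Coquelicot.
Open Scope R_scope.

Lemma eq_facts (p : params) (Hpos : all_params_pos p) (Hst : standing p)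
  K S I Rr : 0 < K -> is_equilibrium p K S I 0 0 Rr -> 0 < S -> 0 < I -> 0 < Rr ->
  S + I = sigma1 p /\
  K * (b p - mu0 p - alpha1 p * I) = b p * (sigma1 p + Rr) /\
  Rr * (mu4' p - mu0 p - alpha1 p * I) = rho1 p * I /\
  alpha1 p * I < mu4' p - mu0 p.
Proof.
  intros HK [H1 [H2 [_ [_ H5]]]] HS HI HR.
  destruct Hpos as (Hb & Ha1 & Ha2 & Ha3 & Hb1 & Hb2 & Hg1 & Hg2 & He1 & He2
    & Hr1 & Hr2 & Hr3 & Hm0 & Hm1 & Hm2 & Hm3 & Hm4).
  unfold fS, fI1, fR in *.
  set (l := logi p K S I 0 0 Rr) in *.
  assert (Hl : l * K = b p * (K - (S + I + Rr))).
  { unfold l, logi. field. lra. }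
  assert (E1 : (l - alpha1 p * I - mu0 p) * S = 0) by (rewrite <- H1; ring).
  apply Rmult_integral in E1. destruct E1 as [E1|E1]; [|lra].
  assert (E2 : (l + alpha1 p * S - mu1 p) * I = 0) by (rewrite <- H2; ring).
  apply Rmult_integral in E2. destruct E2 as [E2|E2]; [|lra].
  assert (ES : S + I = sigma1 p).
  { unfold sigma1. apply (Rmult_eq_reg_l (alpha1 p)); [|lra].
    field_simplify; [lra|lra]. }
  assert (E3 : Rr * (mu4' p - mu0 p - alpha1 p * I) = rho1 p * I).
  { assert (l = alpha1 p * I + mu0 p) by lra. subst l. nra. }
  split; [exact ES|]. split.
  { assert (l = alpha1 p * I + mu0 p) by lra.
    rewrite H in Hl. rewrite <- ES. nra. }
  split; [exact E3|].
  assert (0 < rho1 p * I) by nra.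
  nra.
Qed.

Theorem mainTheorem12 (p : params) (Hpos : all_params_pos p) (Hst : standing p)
  (Hd1 : 0 < delta1 p) (Hd2 : 0 < delta2 p)
  (Hmu : (mu4' p - mu0 p) / alpha1 p < sigma1 p / 2)
  (Sst Ist Rst : R -> R)
  (HG3 : forall K, Kstar p < K ->
     is_equilibrium p K (Sst K) (Ist K) 0 0 (Rst K) /\
     0 < Sst K /\ 0 < Ist K /\ 0 < Rst K) :
  let P1 := fun K => delta1 p * Ist K + alpha2 p * (sigma1 p - sigma2 p) in
  let Q1 := fun K => delta2 p * Ist K + alpha3 p * (sigma1 p - sigma3 p) in
  let U1 := fun K => beta2 p * (gamma1 p + gamma2 p) * Sst K * Ist K in
  let D1 := fun K => P1 K * Q1 K - U1 K in
  let L := alpha2 p * alpha3 p * (sigma2 p - sigma1 p) * (sigma3 p - sigma1 p) in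
  (forall K1 K2, Kstar p < K1 -> K1 < K2 -> P1 K1 < P1 K2) /\
  (forall K1 K2, Kstar p < K1 -> K1 < K2 -> Q1 K1 < Q1 K2) /\
  (forall K1 K2, Kstar p < K1 -> K1 < K2 -> U1 K1 < U1 K2) /\
  (forall J : R -> Prop,
     (forall x y z, J x -> J z -> x <= y -> y <= z -> J y) ->
     (forall K, J K -> Kstar p < K) ->
     (forall K, J K -> P1 K < 0 /\ Q1 K < 0) ->
     forall K1 K2, J K1 -> J K2 -> K1 < K2 -> D1 K2 < D1 K1) /\
  filterlim D1 (at_right (Kstar p)) (locally L) /\ 0 < L.
Proof.
  intros P1 Q1 U1 D1 L.
  pose proof Hpos as Hpos'.
  destruct Hpos' as (Hb & Ha1 & Ha2 & Ha3 & Hb1 & Hb2 & Hg1 & Hg2 & He1 & He2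
    & Hr1 & Hr2 & Hr3 & Hm0 & Hm1 & Hm2 & Hm3 & Hm4).
  pose proof Hst as Hst'.
  destruct Hst' as (S0 & S1 & S2 & S3 & S4 & S5 & S6 & S7 & S8 & S9 & S10).
  assert (Hs1 : 0 < sigma1 p).
  { unfold sigma1, mu1 in *. apply Rdiv_lt_0_compat; lra. }
  assert (HKs : 0 < Kstar p).
  { unfold Kstar. apply Rdiv_lt_0_compat; [nra|lra]. }
  assert (HKs2 : Kstar p * (b p - mu0 p) = b p * sigma1 p).
  { unfold Kstar. field. lra. }
  assert (Ihalf : mu4' p - mu0 p < alpha1 p * (sigma1 p / 2)).
  { apply (Rmult_lt_compat_l (alpha1 p)) in Hmu; [|lra].
    replace (alpha1 p * ((mu4' p - mu0 p) / alpha1 p)) with (mu4' p - mu0 p)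
      in Hmu by (field; lra). exact Hmu. }
  assert (F : forall K, Kstar p < K ->
    0 < Sst K /\ 0 < Ist K /\ 0 < Rst K /\
    Sst K + Ist K = sigma1 p /\
    K * (b p - mu0 p - alpha1 p * Ist K) = b p * (sigma1 p + Rst K) /\
    Rst K * (mu4' p - mu0 p - alpha1 p * Ist K) = rho1 p * Ist K /\
    alpha1 p * Ist K < mu4' p - mu0 p).
  { intros K HK. destruct (HG3 K HK) as (He & HS & HI & HR).
    destruct (eq_facts p Hpos Hst K _ _ _ ltac:(lra) He HS HI HR) as (A&B&C&D).
    repeat split; assumption. }
  assert (Imono : forall K1 K2, Kstar p < K1 -> K1 < K2 -> Ist K1 < Ist K2).
  { intros K1 K2 HK1 HK12.
    destruct (F K1 HK1) as (A1&B1&C1&D1'&E1&G1&H1).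
    destruct (F K2 ltac:(lra)) as (A2&B2&C2&D2&E2&G2&H2).
    destruct (Rlt_or_le (Ist K1) (Ist K2)) as [h|h]; [exact h|exfalso].
    set (I1 := Ist K1) in *. set (I2 := Ist K2) in *.
    set (R1 := Rst K1) in *. set (R2 := Rst K2) in *.
    set (d1 := mu4' p - mu0 p - alpha1 p * I1) in *.
    set (d2 := mu4' p - mu0 p - alpha1 p * I2) in *.
    assert (d1 <= d2) by (unfold d1, d2; nra).
    assert (Hd2p : 0 < d2) by (unfold d2; lra).
    assert (rho1 p * I2 <= rho1 p * I1) by nra.
    assert (R1 * d1 <= R1 * d2) by nra.
    assert (R2 * d2 <= R1 * d2) by lra.
    assert (R2 <= R1) by (apply (Rmult_le_reg_r d2); lra).
    set (e1 := b p - mu0 p - alpha1 p * I1) in *.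
    set (e2 := b p - mu0 p - alpha1 p * I2) in *.
    assert (0 < e1) by (unfold e1; lra).
    assert (e1 <= e2) by (unfold e1, e2; nra).
    assert (K2 * e2 <= K1 * e1) by nra.
    nra. }
  assert (Hc : 0 < beta2 p * (gamma1 p + gamma2 p)) by nra.
  assert (Ibound : forall K, Kstar p < K -> Ist K < sigma1 p / 2).
  { intros K HK. destruct (F K HK) as (_&_&_&_&_&_&H). nra. }
  split; [intros K1 K2 H1 H2; unfold P1; pose proof (Imono K1 K2 H1 H2); nra|].
  split; [intros K1 K2 H1 H2; unfold Q1; pose proof (Imono K1 K2 H1 H2); nra|].
  split.
  { intros K1 K2 H1 H2; unfold U1. pose proof (Imono K1 K2 H1 H2).
    destruct (F K1 H1) as (_&_&_&A1&_). destruct (F K2 ltac:(lra)) as (_&_&_&A2&_).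
    pose proof (Ibound K2 ltac:(lra)).
    replace (Sst K1) with (sigma1 p - Ist K1) by lra.
    replace (Sst K2) with (sigma1 p - Ist K2) by lra.
    set (c := beta2 p * (gamma1 p + gamma2 p)) in *.
    assert (0 < (Ist K2 - Ist K1) * (sigma1 p - Ist K1 - Ist K2)) by
      (apply Rmult_lt_0_compat; lra).
    nra. }
  split.
  { intros J _ HJK HJPQ K1 K2 HJ1 HJ2 H12.
    pose proof (HJK K1 HJ1) as HK1.
    destruct (HJPQ K1 HJ1) as [P1n Q1n]. destruct (HJPQ K2 HJ2) as [P2n Q2n].
    assert (HP : P1 K1 < P1 K2) by (unfold P1; pose proof (Imono K1 K2 HK1 H12); nra).
    assert (HQ : Q1 K1 < Q1 K2) by (unfold Q1; pose proof (Imono K1 K2 HK1 H12); nra).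
    assert (HU : U1 K1 < U1 K2).
    { unfold U1. pose proof (Imono K1 K2 HK1 H12).
      destruct (F K1 HK1) as (_&_&_&A1&_). destruct (F K2 ltac:(lra)) as (_&_&_&A2&_).
      pose proof (Ibound K2 ltac:(lra)).
      replace (Sst K1) with (sigma1 p - Ist K1) by lra.
      replace (Sst K2) with (sigma1 p - Ist K2) by lra.
      set (c := beta2 p * (gamma1 p + gamma2 p)) in *.
      assert (0 < (Ist K2 - Ist K1) * (sigma1 p - Ist K1 - Ist K2)) by
        (apply Rmult_lt_0_compat; lra).
      nra. }
    unfold D1.
    assert (P1 K2 * Q1 K2 < P1 K1 * Q1 K1) by nra.
    lra. }
  split.
  { set (h := fun x => (delta1 p * x + alpha2 p * (sigma1 p - sigma2 p)) *
                       (delta2 p * x + alpha3 p * (sigma1 p - sigma3 p)) -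
                       beta2 p * (gamma1 p + gamma2 p) * (sigma1 p - x) * x).
    assert (Hext : at_right (Kstar p) (fun K => h (Ist K) = D1 K)).
    { exists (mkposreal 1 Rlt_0_1). intros y _ Hy.
      destruct (F y Hy) as (_&_&_&A&_).
      unfold h, D1, P1, Q1, U1. replace (Sst y) with (sigma1 p - Ist y) by lra.
      ring. }
    apply (filterlim_ext_loc (fun K => h (Ist K))); [exact Hext|].
    apply (filterlim_comp _ _ _ Ist h _ (locally 0)).
    - apply filterlim_locally. intros eps.
      set (c0 := Kstar p * alpha1 p / (b p - mu0 p)).
      assert (Hc0 : 0 < c0) by (unfold c0; apply Rdiv_lt_0_compat; nra).
      assert (Hd : 0 < eps * c0) by (apply Rmult_lt_0_compat; [apply cond_pos|exact Hc0]).
      exists (mkposreal _ Hd). intros y Hy Hy2. simpl in Hy.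
      change (Rabs (Ist y - 0) < eps).
      change (Rabs (y - Kstar p) < eps * c0) in Hy.
      destruct (F y Hy2) as (_&HI&HR&_&E&_).
      rewrite Rabs_pos_eq in Hy by lra. rewrite Rminus_0_r, Rabs_pos_eq by lra.
      assert (Hkey : Kstar p * alpha1 p * Ist y <= (y - Kstar p) * (b p - mu0 p)).
      { assert (0 <= (y - Kstar p) * (alpha1 p * Ist y)) by
          (apply Rmult_le_pos; nra).
        assert (0 <= b p * Rst y) by nra.
        assert (y * (b p - mu0 p - alpha1 p * Ist y) >= Kstar p * (b p - mu0 p)) by
          (rewrite E, HKs2; nra).
        nra. }
      assert (c0 * Ist y <= y - Kstar p).
      { unfold c0. apply (Rmult_le_reg_r (b p - mu0 p)); [lra|].
        replace (Kstar p * alpha1 p / (b p - mu0 p) * Ist y * (b p - mu0 p))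
          with (Kstar p * alpha1 p * Ist y) by (field; lra). exact Hkey. }
      nra.
    - replace L with (h 0).
      + apply (continuity_pt_filterlim h 0). unfold h. reg.
      + unfold h, L. ring. }
  unfold L. apply Rmult_lt_0_compat; [|lra].
  apply Rmult_lt_0_compat; [nra|lra].
Qed.
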